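(* Let $(\mathcal P_1,\cdot_1,[-,-]_1)$ and $(\mathcal P_2,\cdot_2,[-,-]_2)$ be Poisson algebras, and let $\mathcal P=\mathcal P_1\otimes\mathcal P_2$ be the Poisson algebra with componentwise product $\cdot$ and Lie bracket $$[x_1\otimes y_1,x_2\otimes y_2]_\otimes=[x_1,x_2]_1\otimes(y_1\cdot_2y_2)+(x_1\cdot_1x_2)\otimes[y_1,y_2]_2 .$$ Endow $\mathcal P$ with the $n$-ary bracket $$[x_1,x_2,\dots,x_n]:=[x_1,[x_2,\dots,[x_{n-1},x_n]_\otimes\dots]_\otimes]_\otimes,\qquad x_i\in\mathcal P.$$ Let $\mathcal I$ be the ideal of the Poisson algebra $(\mathcal P,\cdot,[-,-]_\otimes)$ generated by all elements $$[x_1,\dots,x_i,\dots,x_j,\dots,x_n]+[x_1,\dots,x_j,\dots,x_i,\dots,x_n],\qquad 1\le i<j\le n,\ x_k\in\mathcal P.$$ Then the quotient $\mathcal P/\mathcal I$, with the induced product and the induced $n$-ary bracket $[\bar x_1,\dots,\bar x_n]=[x_1,\dots,x_n]+\mathcal I$, is a Poisson $n$-Lie algebra.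
   Context: A Poisson algebra is a commutative associative algebra $(\mathcal P,\cdot)$ with a Lie bracket $[-,-]$ satisfying $[x,y\cdot z]=[x,y]\cdot z+y\cdot[x,z]$. An ideal of a Poisson algebra is a subspace closed under multiplication by arbitrary elements with respect to both $\cdot$ and $[-,-]$. A Poisson $n$-Lie algebra is a commutative associative algebra with an $n$-linear skew-symmetric bracket satisfying the fundamental identity $[x_1,\dots,x_{n-1},[y_1,\dots,y_n]]=\sum_{i=1}^n[y_1,\dots,[x_1,\dots,x_{n-1},y_i],\dots,y_n]$ and the Leibniz rule $[y\cdot z,x_2,\dots,x_n]=y\cdot[z,x_2,\dots,x_n]+z\cdot[y,x_2,\dots,x_n]$. *)

(* Defs.v *)
From mathcomp Require Import all_boot all_algebra.
Set Implicit Arguments. Unset Strict Implicit. Unset Printing Implicit Defensive.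
Import GRing.Theory.
Local Open Scope ring_scope.

(* All algebras are over a field K; an "algebra" is given as a K-vector space
   (lmodType K) together with explicit bilinear operations (no unit assumed). *)

Section Defs.
Variable K : fieldType.

Definition lin (U V : lmodType K) (g : U -> V) : Prop :=
  forall (a : K) (u v : U), g (a *: u + v) = a *: g u + g v.

Definition bilin (U V W : lmodType K) (f : U -> V -> W) : Prop :=
  (forall (a : K) (u u' : U) (v : V), f (a *: u + u') v = a *: f u v + f u' v) /\
  (forall (a : K) (u : U) (v v' : V), f u (a *: v + v') = a *: f u v + f u v').

Definition comm_assoc_alg (A : lmodType K) (mul : A -> A -> A) : Prop :=
  bilin mul /\ (forall x y, mul x y = mul y x) /\
  (forall x y z, mul x (mul y z) = mul (mul x y) z).

Definition lie_bracket (A : lmodType K) (br : A -> A -> A) : Prop :=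
  bilin br /\ (forall x, br x x = 0) /\
  (forall x y z, br x (br y z) + br y (br z x) + br z (br x y) = 0).

Definition poisson (A : lmodType K) (mul br : A -> A -> A) : Prop :=
  comm_assoc_alg mul /\ lie_bracket br /\
  (forall x y z, br x (mul y z) = mul (br x y) z + mul y (br x z)).

(* t : P1 -> P2 -> P exhibits P as the tensor product P1 (x)_K P2:
   t is bilinear, the pure tensors span P, and every bilinear map factors
   through t via a linear map (uniqueness follows from spanning). *)
Definition is_tensor_product (P1 P2 P : lmodType K) (t : P1 -> P2 -> P) : Prop :=
  bilin t /\
  (forall p : P, exists (k : nat) (a : 'I_k -> P1) (b : 'I_k -> P2),
      p = \sum_(i < k) t (a i) (b i)) /\
  (forall (W : lmodType K) (f : P1 -> P2 -> W), bilin f ->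
      exists g : P -> W, lin g /\ forall x y, g (t x y) = f x y).

Definition poisson_ideal (A : lmodType K) (mul br : A -> A -> A) (J : A -> Prop) : Prop :=
  J 0 /\ (forall x y, J x -> J y -> J (x + y)) /\ (forall (a : K) x, J x -> J (a *: x)) /\
  (forall x y, J x -> J (mul y x) /\ J (mul x y) /\ J (br y x) /\ J (br x y)).

Definition gen_poisson_ideal (A : lmodType K) (mul br : A -> A -> A) (S : A -> Prop)
  (x : A) : Prop :=
  forall J : A -> Prop, poisson_ideal mul br J -> (forall y, S y -> J y) -> J x.

Fixpoint nest (A : lmodType K) (br : A -> A -> A) (s : seq A) : A :=
  match s with
  | [::] => 0
  | [:: x] => x
  | x :: s' => br x (nest br s')
  end.

Definition nbr (A : lmodType K) (br : A -> A -> A) (n : nat) (x : 'I_n -> A) : A :=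
  nest br (map x (enum 'I_n)).

Definition upd (A : Type) (n : nat) (x : 'I_n -> A) (k : 'I_n) (v : A) : 'I_n -> A :=
  fun m => if m == k then v else x m.
Definition swapf (A : Type) (n : nat) (x : 'I_n -> A) (i j : 'I_n) : 'I_n -> A :=
  fun m => if m == i then x j else if m == j then x i else x m.
Definition firstset (A : Type) (n : nat) (x : 'I_n -> A) (v : A) : 'I_n -> A :=
  fun m => if val m == 0%N then v else x m.
Definition lastset (A : Type) (n : nat) (x : 'I_n -> A) (v : A) : 'I_n -> A :=
  fun m => if val m == n.-1 then v else x m.

Definition skew_gens (A : lmodType K) (br : A -> A -> A) (n : nat) (p : A) : Prop :=
  exists (x : 'I_n -> A) (i j : 'I_n), (i < j)%N /\ p = nbr br x + nbr br (swapf x i j).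

Definition poisson_nlie (A : lmodType K) (n : nat) (mul : A -> A -> A)
  (B : ('I_n -> A) -> A) : Prop :=
  comm_assoc_alg mul /\
  (forall (x : 'I_n -> A) (k : 'I_n) (a : K) (u v : A),
      B (upd x k (a *: u + v)) = a *: B (upd x k u) + B (upd x k v)) /\
  (forall (x : 'I_n -> A) (i j : 'I_n), i != j -> B (swapf x i j) = - B x) /\
  (forall x y : 'I_n -> A,
      B (lastset x (B y)) = \sum_(i < n) B (upd y i (B (lastset x (y i))))) /\
  (forall (x : 'I_n -> A) (y z : A),
      B (firstset x (mul y z)) = mul y (B (firstset x z)) + mul z (B (firstset x y))).

End Defs.

(* Main.v *)
Require Import Defs.
From Stdlib Require Import IndefiniteDescription.
From mathcomp Require Import all_boot all_algebra.
Set Implicit Arguments. Unset Strict Implicit. Unset Printing Implicit Defensive.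
Import GRing.Theory.
Local Open Scope ring_scope.

Section Gen.
Variable K : fieldType.

Section Lin.
Variables (U V : lmodType K) (g : U -> V) (hg : lin g).
Lemma lin0 : g 0 = 0.
Proof. by have := hg (-1) 0 0; rewrite scaler0 addr0 scaleN1r addNr. Qed.
Lemma linD u v : g (u + v) = g u + g v.
Proof. by have := hg 1 u v; rewrite !scale1r. Qed.
Lemma linN u : g (- u) = - g u.
Proof. by have := hg (-1) u 0; rewrite !scaleN1r !addr0 lin0 addr0. Qed.
Lemma linZ a u : g (a *: u) = a *: g u.
Proof. by have := hg a u 0; rewrite !addr0 lin0 addr0. Qed.
Lemma linB u v : g (u - v) = g u - g v.
Proof. by rewrite linD linN. Qed.
Lemma lin_sum (I : Type) (r : seq I) (Pr : pred I) (F : I -> U) :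
  g (\sum_(i <- r | Pr i) F i) = \sum_(i <- r | Pr i) g (F i).
Proof. exact: (big_morph g linD lin0). Qed.
End Lin.

Section Bil.
Variables (U V W : lmodType K) (f : U -> V -> W) (hf : bilin f).
Lemma bil_l v : lin (fun u => f u v).
Proof. by move=> a u u'; case: hf => h _; apply: h. Qed.
Lemma bil_r u : lin (fun v => f u v).
Proof. by move=> a v v'; case: hf => _ h; apply: h. Qed.
Lemma f0l v : f 0 v = 0. Proof. exact: (lin0 (bil_l v)). Qed.
Lemma f0r u : f u 0 = 0. Proof. exact: (lin0 (bil_r u)). Qed.
Lemma fDl u u' v : f (u + u') v = f u v + f u' v. Proof. exact: (linD (bil_l v)). Qed.
Lemma fDr u v v' : f u (v + v') = f u v + f u v'. Proof. exact: (linD (bil_r u)). Qed.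
Lemma fNl u v : f (- u) v = - f u v. Proof. exact: (linN (bil_l v)). Qed.
Lemma fNr u v : f u (- v) = - f u v. Proof. exact: (linN (bil_r u)). Qed.
Lemma fZl a u v : f (a *: u) v = a *: f u v. Proof. exact: (linZ (bil_l v)). Qed.
Lemma fZr a u v : f u (a *: v) = a *: f u v. Proof. exact: (linZ (bil_r u)). Qed.
Lemma fBl u u' v : f (u - u') v = f u v - f u' v. Proof. exact: (linB (bil_l v)). Qed.
Lemma fBr u v v' : f u (v - v') = f u v - f u v'. Proof. exact: (linB (bil_r u)). Qed.
Lemma fsumr (I : Type) (r : seq I) (Pr : pred I) (F : I -> V) u :
  f u (\sum_(i <- r | Pr i) F i) = \sum_(i <- r | Pr i) f u (F i).
Proof. exact: (lin_sum (bil_r u)). Qed.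
End Bil.

Section Pois.
Variables (A : lmodType K) (m b : A -> A -> A) (hA : poisson m b).
Lemma pm_bil : bilin m. Proof. by case: hA => [[]]. Qed.
Lemma pmC x y : m x y = m y x. Proof. by case: hA => [[_ []]]. Qed.
Lemma pmA x y z : m x (m y z) = m (m x y) z. Proof. by case: hA => [[_ []]]. Qed.
Lemma pb_bil : bilin b. Proof. by case: hA => _ [[]]. Qed.
Lemma pb_xx x : b x x = 0. Proof. by case: hA => _ [[_ []]]. Qed.
Lemma pb_cyc x y z : b x (b y z) + b y (b z x) + b z (b x y) = 0.
Proof. by case: hA => _ [[_ []]]. Qed.
Lemma pb_leibr x y z : b x (m y z) = m (b x y) z + m y (b x z).
Proof. by case: hA => _ []. Qed.
Lemma pb_anti x y : b x y = - b y x.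
Proof.
have := pb_xx (x + y).
rewrite (fDl pb_bil) !(fDr pb_bil) !pb_xx add0r addr0 => /eqP.
by rewrite addr_eq0 => /eqP.
Qed.
Lemma pb_jac x y z : b x (b y z) = b (b x y) z + b y (b x z).
Proof.
have /eqP := pb_cyc x y z.
rewrite (pb_anti z x) (fNr pb_bil) (pb_anti z (b x y)).
by rewrite -addrA -opprD subr_eq0 => /eqP ->; rewrite addrC.
Qed.
Lemma pb_leibl y z w : b (m y z) w = m y (b z w) + m z (b y w).
Proof.
rewrite pb_anti pb_leibr opprD -(fNl pm_bil) -(fNr pm_bil) -!pb_anti.
by rewrite addrC (pmC (b y w)).
Qed.
End Pois.
End Gen.
Section Tens.
Variable K : fieldType.
Variables (P1 : lmodType K) (mul1 br1 : P1 -> P1 -> P1) (hP1 : poisson mul1 br1).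
Variables (P2 : lmodType K) (mul2 br2 : P2 -> P2 -> P2) (hP2 : poisson mul2 br2).
Variables (P : lmodType K) (t : P1 -> P2 -> P) (ht : is_tensor_product t).
Variables (mul br : P -> P -> P) (hmul : bilin mul) (hbr : bilin br).
Hypothesis hmulE : forall x1 y1 x2 y2, mul (t x1 y1) (t x2 y2) = t (mul1 x1 x2) (mul2 y1 y2).
Hypothesis hbrE : forall x1 y1 x2 y2,
      br (t x1 y1) (t x2 y2) = t (br1 x1 x2) (mul2 y1 y2) + t (mul1 x1 x2) (br2 y1 y2).

Lemma ht_bil : bilin t. Proof. by case: ht. Qed.

Lemma span_ind (Pr : P -> Prop) : Pr 0 -> (forall u v, Pr u -> Pr v -> Pr (u + v)) ->
  (forall a b, Pr (t a b)) -> forall p, Pr p.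
Proof.
move=> h0 hD hp p; case: ht => _ [hsp _]; have [k [a [b ->]]] := hsp p.
by apply: big_ind.
Qed.

Lemma Pcomm x y : mul x y = mul y x.
Proof.
elim/span_ind: x y => [|u v IHu IHv|a1 b1] y.
- by rewrite (f0l hmul) (f0r hmul).
- by rewrite (fDl hmul) (fDr hmul) IHu IHv.
elim/span_ind: y => [|u v IHu IHv|a2 b2].
- by rewrite (f0l hmul) (f0r hmul).
- by rewrite (fDl hmul) (fDr hmul) IHu IHv.
by rewrite !hmulE (pmC hP1) (pmC hP2).
Qed.

Lemma Passoc x y z : mul x (mul y z) = mul (mul x y) z.
Proof.
elim/span_ind: x y z => [|u v IHu IHv|a1 b1] y z.
- by rewrite !(f0l hmul).
- rewrite !(fDl hmul) IHu IHv. done.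
elim/span_ind: y z => [|u v IHu IHv|a2 b2] z.
- by rewrite (f0l hmul) (f0r hmul) (f0l hmul).
- by rewrite !(fDl hmul, fDr hmul) IHu IHv.
elim/span_ind: z => [|u v IHu IHv|a3 b3].
- by rewrite !(f0r hmul).
- by rewrite !(fDr hmul) IHu IHv.
by rewrite !hmulE (pmA hP1) (pmA hP2).
Qed.

Lemma Panti x y : br x y = - br y x.
Proof.
elim/span_ind: x y => [|u v IHu IHv|a1 b1] y.
- by rewrite (f0l hbr) (f0r hbr) oppr0.
- by rewrite (fDl hbr) (fDr hbr) IHu IHv opprD.
elim/span_ind: y => [|u v IHu IHv|a2 b2].
- by rewrite (f0l hbr) (f0r hbr) oppr0.
- by rewrite (fDl hbr) (fDr hbr) IHu IHv opprD.
rewrite !hbrE (pb_anti hP1 a2) (pb_anti hP2 b2) (fNl ht_bil) (fNr ht_bil).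
by rewrite (pmC hP1 a2) (pmC hP2 b2) opprD !opprK.
Qed.
Lemma Pleib y z w : br (mul y z) w = mul y (br z w) + mul z (br y w).
Proof.
elim/span_ind: y z w => [|u v IHu IHv|b1 b2] z w.
- by rewrite !(f0l hmul, f0l hbr, f0r hmul) addr0.
- by rewrite !(fDl hmul, fDl hbr, fDr hmul) IHu IHv addrACA.
elim/span_ind: z w => [|u v IHu IHv|c1 c2] w.
- by rewrite !(f0l hmul, f0l hbr, f0r hmul) addr0.
- by rewrite !(fDl hmul, fDl hbr, fDr hmul, fDr hbr) IHu IHv addrACA.
elim/span_ind: w => [|u v IHu IHv|a1 a2].
- by rewrite !(f0l hmul, f0l hbr, f0r hmul, f0r hbr) addr0.
- by rewrite !(fDl hmul, fDl hbr, fDr hmul, fDr hbr) IHu IHv addrACA.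
rewrite hmulE !hbrE !(fDr hmul) !hmulE (pb_leibl hP1) (pb_leibl hP2).
rewrite !(fDl ht_bil, fDr ht_bil).
rewrite (pmA hP2 b2 c2 a2) (pmA hP1 b1 c1 a1) (pmA hP2 c2 b2 a2) (pmC hP2 c2 b2).
by rewrite (pmA hP1 c1 b1 a1) (pmC hP1 c1 b1) addrACA.
Qed.
Lemma Pjac x y z : br x (br y z) = br (br x y) z + br y (br x z).
Proof.
elim/span_ind: x y z => [|u v IHu IHv|a1 a2] y z.
- by rewrite !(f0l hbr, f0r hbr) addr0.
- by rewrite !(fDl hbr, fDr hbr) IHu IHv addrACA.
elim/span_ind: y z => [|u v IHu IHv|b1 b2] z.
- by rewrite !(f0l hbr, f0r hbr) addr0.
- by rewrite !(fDl hbr, fDr hbr) IHu IHv addrACA.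
elim/span_ind: z => [|u v IHu IHv|c1 c2].
- by rewrite !(f0l hbr, f0r hbr) addr0.
- by rewrite !(fDl hbr, fDr hbr) IHu IHv addrACA.
rewrite !hbrE !(fDl hbr, fDr hbr) !hbrE.
rewrite (pb_leibr hP1 a1 b1) (pb_leibr hP2 a2 b2) (pb_leibl hP1 a1 b1) (pb_leibl hP2 a2 b2).
rewrite (pb_leibr hP1 b1 a1) (pb_leibr hP2 b2 a2).
rewrite !(fDl ht_bil, fDr ht_bil).
rewrite (pb_anti hP2 b2 a2) (fNl (pm_bil hP2)) (fNr ht_bil).
rewrite (pb_anti hP1 b1 a1) (fNl (pm_bil hP1)) (fNl ht_bil).
rewrite (pb_jac hP1 a1 b1 c1) (pb_jac hP2 a2 b2 c2) !(fDl ht_bil, fDr ht_bil).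
rewrite (pmA hP2 a2 b2 c2) (pmA hP2 b2 a2 c2) (pmC hP2 b2 a2).
rewrite (pmA hP1 a1 b1 c1) (pmA hP1 b1 a1 c1) (pmC hP1 b1 a1).
rewrite !addrA.
rewrite [RHS](ACl (((1*7*4*11*2*9*6*12)*(3*10))*(5*8))) /=.
by rewrite !addrN !addr0.
Qed.

Variables (m : nat) (Q : lmodType K) (mulQ : Q -> Q -> Q) (pi : P -> Q).
Hypothesis hpi_lin : lin pi.
Hypothesis hpi_surj : forall q : Q, exists p : P, pi p = q.
Hypothesis hpi_ker : forall p : P, pi p = 0 <-> gen_poisson_ideal mul br (skew_gens br m.+2) p.
Hypothesis hpi_mul : forall x y : P, pi (mul x y) = mulQ (pi x) (pi y).

Notation I := (gen_poisson_ideal mul br (skew_gens br m.+2)).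

Lemma I_ideal : poisson_ideal mul br I.
Proof.
split; [|split; [|split]].
- by move=> J [].
- move=> x y hx hy J hJ hS; have [_ [hD _]] := hJ; apply: hD; [exact: hx | exact: hy].
- move=> a x hx J hJ hS; have [_ [_ [hZ _]]] := hJ; exact: hZ (hx J hJ hS).
- move=> x y hx; split; [|split; [|split]] => J hJ hS; have [_ [_ [_ h]]] := hJ;
  have [h1 [h2 [h3 h4]]] := h x y (hx J hJ hS) => //.
Qed.

Lemma I_S p : skew_gens br m.+2 p -> I p.
Proof. by move=> hp J _ hS; apply: hS. Qed.

Lemma piE a b : pi a = pi b <-> I (a - b).
Proof.
split => [h|h].
- by apply/hpi_ker; rewrite (linB hpi_lin) h subrr.
- by apply/eqP; rewrite -subr_eq0 -(linB hpi_lin); apply/eqP/hpi_ker.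
Qed.

Lemma br_pi a a' b b' : pi a = pi a' -> pi b = pi b' -> pi (br a b) = pi (br a' b').
Proof.
move=> /piE ha /piE hb; apply/piE.
have -> : br a b - br a' b' = br (a - a') b + br a' (b - b').
  by rewrite (fBl hbr) (fBr hbr) addrA subrK.
have [_ [hD [_ hI]]] := I_ideal.
apply: hD; first by have [_ [_ [_ ?]]] := hI _ b ha.
by have [_ [_ [? _]]] := hI _ a' hb.
Qed.

Lemma nest_cons x s : s != [::] -> nest br (x :: s) = br x (nest br s).
Proof. by case: s. Qed.

Lemma nest_pi s s' : map pi s = map pi s' -> pi (nest br s) = pi (nest br s').
Proof.
elim: s s' => [|x s IH] [|x' s'] //; rewrite !map_cons => -[hx hs].
case: s IH hs => [|y s] IH; case: s' => [|y' s'] hs; try by case: hs.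
  exact: hx.
rewrite (nest_cons x) // (nest_cons x') //; apply: br_pi => //; exact: IH.
Qed.

Lemma nbr_pi (x x' : 'I_m.+2 -> P) : (forall i, pi (x i) = pi (x' i)) ->
  pi (nbr br x) = pi (nbr br x').
Proof. by move=> h; apply: nest_pi; rewrite -!map_comp; apply: eq_map. Qed.

Lemma map_upd_notin (X : 'I_m.+2 -> P) k w r : k \notin r -> map (upd X k w) r = map X r.
Proof.
move=> hk; apply/eq_in_map => i hi; rewrite /upd; case: eqP => // e.
by rewrite -e hi in hk.
Qed.

Lemma nest_upd (X : 'I_m.+2 -> P) k a u v r : uniq r -> k \in r ->
  nest br (map (upd X k (a *: u + v)) r) =
  a *: nest br (map (upd X k u) r) + nest br (map (upd X k v) r).
Proof.
elim: r => [|i r IH] // /andP[hi hu]; rewrite in_cons => /orP[/eqP ek | kr].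
- subst i; rewrite !map_cons /upd eqxx -/(upd X k _) -/(upd X k u) -/(upd X k v).
  rewrite !map_upd_notin //.
  have [->|rn] := eqVneq (map X r) [::]; first by [].
  rewrite !nest_cons //; by case: hbr => hl _; apply: hl.
- have ik : (i == k) = false by apply/eqP => e; rewrite e kr in hi.
  rewrite !map_cons /upd ik -/(upd X k _) -/(upd X k u) -/(upd X k v).
  have rn : forall w, map (upd X k w) r != [::] by move=> w; case: r kr {IH hu hi}.
  rewrite !nest_cons // IH //; by case: hbr => _ hr; apply: hr.
Qed.

Lemma upd_eq (X : 'I_m.+2 -> P) k w : upd X k w k = w.
Proof. by rewrite /upd eqxx. Qed.
Lemma upd_neq (X : 'I_m.+2 -> P) k w i : i != k -> upd X k w i = X i.
Proof. by rewrite /upd => /negPf ->. Qed.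

Lemma nest_der (Y : 'I_m.+2 -> P) V r : uniq r ->
  br V (nest br (map Y r)) = \sum_(i <- r) nest br (map (upd Y i (br V (Y i))) r).
Proof.
elim: r => [|k r IH]; first by rewrite big_nil (f0r hbr).
move=> /andP[hk hu]; rewrite big_cons map_cons (map_cons (upd Y k _)) upd_eq map_upd_notin //.
have [->|rn] := eqVneq r [::]; first by rewrite big_nil addr0.
have mn : forall f : 'I_m.+2 -> P, map f r != [::].
  by move=> f; rewrite -size_eq0 size_map size_eq0.
rewrite !nest_cons // Pjac IH // (fsumr hbr); congr (_ + _).
apply: eq_big_seq => i ir.
have ki : k != i by apply/eqP => e; rewrite e ir in hk.
by rewrite map_cons upd_neq // nest_cons.
Qed.

Lemma nbr_upd (X : 'I_m.+2 -> P) k a u v :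
  nbr br (upd X k (a *: u + v)) = a *: nbr br (upd X k u) + nbr br (upd X k v).
Proof. by apply: nest_upd; [apply: enum_uniq | rewrite mem_enum]. Qed.

Definition Rt (F : 'I_m.+2 -> P) := nest br (map F (map (lift ord0) (enum 'I_m.+1))).

Lemma nbr_first (F : 'I_m.+2 -> P) w : nbr br (firstset F w) = br w (Rt F).
Proof.
rewrite /nbr enum_ordSl map_cons nest_cons; last first.
  by rewrite enum_ordSl.
rewrite {1}/firstset eqxx /Rt; congr (br w (nest br _)).
rewrite -!map_comp; apply/eq_map => i /=.
by rewrite /firstset.
Qed.

Lemma skew_pi (X : 'I_m.+2 -> P) i j : i != j -> pi (nbr br (swapf X i j)) = - pi (nbr br X).
Proof.
move=> nij.
have key : forall i' j' : 'I_m.+2, (i' < j')%N -> pi (nbr br (swapf X i' j')) = - pi (nbr br X).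
  move=> i' j' lt; rewrite -(linN hpi_lin); apply/piE; rewrite opprK addrC.
  by apply: I_S; exists X, i', j'.
case: (ltngtP i j) => [hlt|hlt|e]; first exact: key.
- rewrite -(key _ _ hlt); apply: nbr_pi => l; rewrite /swapf.
  case: (eqVneq l i) => [->|li]; first by rewrite ifN.
  by case: (l == j).
- by move/val_inj: e nij => ->; rewrite eqxx.
Qed.

Definition Vx (X : 'I_m.+2 -> P) := Rt (swapf X ord0 ord_max).

Lemma claimC (X : 'I_m.+2 -> P) z : pi (nbr br (lastset X z)) = pi (br (Vx X) z).
Proof.
have ne : (ord0 : 'I_m.+2) != ord_max by [].
rewrite -[LHS]opprK -(skew_pi _ ne) -(linN hpi_lin) (Panti (Vx X)).
have -> : nbr br (swapf (lastset X z) ord0 ord_max) = nbr br (firstset (swapf X ord0 ord_max) z).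
  rewrite /nbr; congr (nest br _); apply: eq_map => j; rewrite /swapf /firstset /lastset /=.
  have e0 : (nat_of_ord j == 0%N) = (j == ord0) by [].
  rewrite e0; case: eqP => _; first by rewrite eqxx.
  have e1 : (nat_of_ord j == m.+1) = (j == ord_max) by [].
  by rewrite e1; case: eqP.
by rewrite nbr_first.
Qed.

Lemma main_res : exists BQ : ('I_m.+2 -> Q) -> Q,
    (forall x : 'I_m.+2 -> P, BQ (fun i => pi (x i)) = pi (nbr br x)) /\
    poisson_nlie mulQ BQ.
Proof.
pose lift q := proj1_sig (constructive_indefinite_description _ (hpi_surj q)).
have liftK q : pi (lift q) = q := proj2_sig (constructive_indefinite_description _ (hpi_surj q)).
pose BQ (y : 'I_m.+2 -> Q) := pi (nbr br (fun i => lift (y i))).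
have BQE (y : 'I_m.+2 -> Q) (x : 'I_m.+2 -> P) : (forall i, pi (x i) = y i) -> BQ y = pi (nbr br x).
  by move=> h; apply: nbr_pi => i; rewrite liftK h.
exists BQ; split; first by move=> x; apply: BQE.
split; [|split; [|split; [|split]]].
- split; [split|split].
  + move=> a u u' v.
    have [U <-] := hpi_surj u; have [U' <-] := hpi_surj u'; have [W <-] := hpi_surj v.
    by rewrite -(linZ hpi_lin) -(linD hpi_lin) -!hpi_mul (fDl hmul) (fZl hmul) (linD hpi_lin) (linZ hpi_lin).
  + move=> a u v v'.
    have [U <-] := hpi_surj u; have [W <-] := hpi_surj v; have [W' <-] := hpi_surj v'.
    by rewrite -(linZ hpi_lin) -(linD hpi_lin) -!hpi_mul (fDr hmul) (fZr hmul) (linD hpi_lin) (linZ hpi_lin).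
  + move=> u v; have [U <-] := hpi_surj u; have [W <-] := hpi_surj v.
    by rewrite -!hpi_mul Pcomm.
  + move=> u v w; have [U <-] := hpi_surj u; have [W <-] := hpi_surj v.
    have [W' <-] := hpi_surj w.
    by rewrite -!hpi_mul Passoc.
- move=> x k a u v.
  have [U <-] := hpi_surj u; have [W <-] := hpi_surj v.
  pose X i := lift (x i).
  have hu : forall w w', pi w = w' -> BQ (upd x k w') = pi (nbr br (upd X k w)).
    move=> w w' hw; apply: BQE => i; rewrite /upd; case: (i == k) => //.
    by rewrite liftK.
  rewrite -(linZ hpi_lin) -(linD hpi_lin) !(hu _ _ erefl) nbr_upd.
  by rewrite (linD hpi_lin) (linZ hpi_lin).
- move=> x i j nij.
  pose X l := lift (x l).
  rewrite (BQE _ (swapf X i j)); last first.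
    by move=> l; rewrite /swapf; case: (l == i); case: (l == j); rewrite liftK.
  by rewrite skew_pi.
- move=> x y.
  pose X l := lift (x l); pose Y l := lift (y l).
  have e1 : BQ y = pi (nbr br Y) by apply: BQE => l; rewrite liftK.
  have e2 : forall w, BQ (lastset x (pi w)) = pi (nbr br (lastset X w)).
    move=> w; apply: BQE => l; rewrite /lastset; case: (_ == _) => //.
    by rewrite liftK.
  rewrite e1 e2 claimC.
  have e3 : forall i, BQ (upd y i (BQ (lastset x (y i)))) = pi (nbr br (upd Y i (br (Vx X) (Y i)))).
    move=> i; have -> : y i = pi (Y i) by rewrite liftK.
    rewrite e2 claimC; apply: BQE => l; rewrite /upd; case: (l == i) => //.
    by rewrite liftK.
  rewrite (eq_bigr _ (fun i _ => e3 i)) -(lin_sum hpi_lin) /nbr nest_der ?enum_uniq //.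
  by rewrite big_enum.
- move=> x y z.
  have [Y <-] := hpi_surj y; have [Z <-] := hpi_surj z.
  pose X l := lift (x l).
  have e : forall w, BQ (firstset x (pi w)) = pi (nbr br (firstset X w)).
    move=> w; apply: BQE => l; rewrite /firstset; case: (_ == _) => //.
    by rewrite liftK.
  by rewrite -hpi_mul !e -!hpi_mul -(linD hpi_lin) !nbr_first Pleib.
Qed.
End Tens.

Unset Implicit Arguments.

Theorem proposition4p3 (K : fieldType) (n : nat) (hn : (2 <= n)%N)
  (P1 : lmodType K) (mul1 br1 : P1 -> P1 -> P1) (hP1 : poisson mul1 br1)
  (P2 : lmodType K) (mul2 br2 : P2 -> P2 -> P2) (hP2 : poisson mul2 br2)
  (P : lmodType K) (t : P1 -> P2 -> P) (ht : is_tensor_product t)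
  (mul br : P -> P -> P) (hmul : bilin mul) (hbr : bilin br)
  (hmulE : forall x1 y1 x2 y2, mul (t x1 y1) (t x2 y2) = t (mul1 x1 x2) (mul2 y1 y2))
  (hbrE : forall x1 y1 x2 y2,
      br (t x1 y1) (t x2 y2) = t (br1 x1 x2) (mul2 y1 y2) + t (mul1 x1 x2) (br2 y1 y2))
  (Q : lmodType K) (mulQ : Q -> Q -> Q) (pi : P -> Q)
  (hpi_lin : lin pi) (hpi_surj : forall q : Q, exists p : P, pi p = q)
  (hpi_ker : forall p : P, pi p = 0 <-> gen_poisson_ideal mul br (skew_gens br n) p)
  (hpi_mul : forall x y : P, pi (mul x y) = mulQ (pi x) (pi y)) :
  exists BQ : ('I_n -> Q) -> Q,
    (forall x : 'I_n -> P, BQ (fun i => pi (x i)) = pi (nbr br x)) /\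
    poisson_nlie mulQ BQ.
Proof.
move: hpi_ker; case: n hn => [|[|m]] // _ hker.
exact: (main_res hP1 hP2 ht hmul hbr hmulE hbrE hpi_lin hpi_surj hker hpi_mul).
Qed.
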